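(* Let $A$ be a nontrivial closed class of decision tables from $\mathcal M_2^\infty$ and $\psi$ a bounded complexity measure. If the function $G_{\psi,A}$ is not everywhere defined, then the function $\mathcal H^\infty_{\psi,A}$ is not everywhere defined.
   Context: Notation: $\omega=\{0,1,2,\dots\}$; $\mathcal P(\omega)$ is the set of nonempty finite subsets of $\omega$; $E_2=\{0,1\}$. $P=\{f_i:i\in\omega\}$ is a set of attributes, $f_i\neq f_j$ for $i\ne j$. Decision tables: $\mathcal M_2^\infty$ is the set of rectangular tables filled with numbers from $E_2$, whose columns are labeled with pairwise different attributes from $P$, whose rows are pairwise different, and each row of which is labeled with a set from $\mathcal P(\omega)$ (its set of decisions). The empty table (no rows) is denoted $\Lambda$ and belongs to $\mathcal M_2^\infty$. For $T\in\mathcal M_2^\infty$: $\Pi(T)$ is the intersection of the decision sets of all rows (common decisions); $\mathrm{At}(T)$ is the set of attributes labeling columns. For nonempty $T$, $\Omega_2(T)$ is the set of finite words (including the empty word $\lambda$) over the alphabet $\{(f_i,\delta):f_i\in\mathrm{At}(T),\delta\in E_2\}$; for $\alpha=(f_{i_1},\delta_1)\cdots(f_{i_m},\delta_m)$, $T\alpha$ is the subtable of $T$ consisting of the rows having value $\delta_j$ in the column $f_{i_j}$ for all $j$, and $T\lambda=T$. Operations: for $D\subseteq\mathrm{At}(T)$, $I(D,T)$ is obtained from $T$ by deleting the columns labeled with attributes from $D$ and, in each group of rows coinciding on the remaining columns, keeping only the first row; $I(\mathrm{At}(T),T)=\Lambda$. For $\nu:E_2^{|\mathrm{At}(T)|}\to\mathcal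 P(\omega)$, $J(\nu,T)$ is obtained by replacing the decision set of each row $\bar\delta$ by $\nu(\bar\delta)$. $[T]=\{J(\nu,I(D,T)):D\subseteq\mathrm{At}(T),\ \nu:E_2^{|\mathrm{At}(T)\setminus D|}\to\mathcal P(\omega)\}$; for nonempty $A\subseteq\mathcal M_2^\infty$, $[A]=\bigcup_{T\in A}[T]$. $A$ is a closed class if $[A]=A$; nontrivial if it contains a nonempty table. Decision trees: a $2$-decision tree is a finite directed rooted tree with at least two nodes in which the root and the edges leaving the root are unlabeled, each terminal node is labeled with a decision from $\omega$, and each other node is labeled with an attribute from $P$, each edge leaving such a node being labeled with a number from $E_2$. $\mathrm{At}(\Gamma)$ is the set of attributes labeling nodes of $\Gamma$. For a complete path $\tau=v_1,d_1,\dots,v_m,d_m,v_{m+1}$ (from the root to a terminal node), $\pi(\tau)=\lambda$ if $m=1$, and otherwise $\pi(\tau)=(f_{i_2},\delta_2)\cdots(f_{i_m},\delta_m)$ where $v_j$ is labeled $f_{i_j}$ and $d_j$ is labeled $\delta_j$; $T(\tau)=T\pi(\tau)$. For $T\ne\Lambda$, a nondeterministic decision tree for $T$ is a $2$-decision tree $\Gamma$ with $\mathrm{At}(\Gamma)\subseteq\mathrm{At}(T)$ such that every row of $T$ belongs to $T(\tau)$ for some complete path $\tau$, and for every complete path $\tau$ either $T(\tau)=\Lambda$ or the decision at the terminal node of $\tau$ belongs to $\Pi(T(\tau))$. A deterministic decision tree for $T$ is a nondeterministic decision tree for $T$ in which, additionally, exactly one edge leaves the root and the edges leaving any node that is neither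 the root nor terminal are labeled with pairwise different numbers. Complexity measures: a partially bounded complexity measure is a function $\psi:P^*\to\omega$ on finite words over $P$ such that for all words $\alpha_1,\alpha_2$: $\psi(\alpha_1)=0$ iff $\alpha_1=\lambda$; $\psi(\alpha_1)$ is invariant under permutation of letters; $\psi(\alpha_1)\le\psi(\alpha_1\alpha_2)$; $\psi(\alpha_1\alpha_2)\le\psi(\alpha_1)+\psi(\alpha_2)$. It is bounded if in addition $\psi(\alpha)\ge|\alpha|$ for all $\alpha$. $\psi$ is extended to words $(f_{i_1},\delta_1)\cdots(f_{i_m},\delta_m)$ by $\psi(f_{i_1}\cdots f_{i_m})$ ($\psi(\lambda)=0$). For a $2$-decision tree $\Gamma$, $\psi(\Gamma)=\max_\tau\psi(\pi(\tau))$ over complete paths. For $T\ne\Lambda$, $\psi^d(T)$ (resp. $\psi^a(T)$) is the minimum of $\psi(\Gamma)$ over deterministic (resp. nondeterministic) decision trees $\Gamma$ for $T$; $\psi^d(\Lambda)=\psi^a(\Lambda)=0$. Parameters: $m_\psi(T)=\max\{\psi(f_i):f_i\in\mathrm{At}(T)\}$, $m_\psi(\Lambda)=0$. A word $\alpha\in\Omega_2(T)$ is annihilating for $T$ if $T\alpha=\Lambda$ and $\alpha$ contains no two letters $(f_i,\delta),(f_i,\sigma)$ with $\delta\ne\sigma$; it is irreducible if no word obtained from $\alpha$ by deleting some (at least one) letters is annihilating for $T$; $G(T)$ is the maximum length of an irreducible annihilating word for $T$ if one exists, and $0$ otherwise; $G(\Lambda)=0$. For $n\in\omega$: $A_\psi(n)=\{T\in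 A:m_\psi(T)\le n\}$; $G_{\psi,A}(n)$ is undefined if $\{G(T):T\in A_\psi(n)\}$ is infinite, else its maximum; $\mathcal H^\infty_{\psi,A}(n)$ is undefined if $\{\psi^d(T):T\in A,\psi^a(T)\le n\}$ is infinite, else its maximum. *)

(* Defs.v *)
From mathcomp Require Import all_boot.
From mathcomp Require Import boolp classical_sets cardinality.

Set Implicit Arguments.
Unset Strict Implicit.
Unset Printing Implicit Defensive.

(* Classical "least element" of a set of naturals (0 if the set is empty). *)
Definition nat_min (P : nat -> Prop) : nat :=
  match pselect (exists n, P n) with
  | left h =>
      @ex_minn (fun n => `[< P n >])
        (let: ex_intro n pn := h in ex_intro _ n (asboolT pn))
  | right _ => 0
  end.

(* Attributes f_i are represented by their index i : nat.
   A decision set (element of P(omega)) is represented canonically by the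
   strictly increasing nonempty list of its elements. *)
Definition valid_dec (d : seq nat) : bool := sorted ltn d && ~~ nilp d.

(* A table: list of column attributes (in order) and list of rows (in order);
   a row is its vector of values from E_2 = bool together with its decision set. *)
Record table := Table { cols : seq nat; rows : seq (seq bool * seq nat) }.

Definition Lambda : table := Table [::] [::].

(* Membership in M_2^infty: pairwise different attributes, rectangular,
   pairwise different rows, valid decision sets; all tables without rows are
   identified with Lambda. *)
Definition wf_table (T : table) : bool :=
  [&& uniq (cols T),
      all (fun r => size r.1 == size (cols T)) (rows T),
      uniq (map fst (rows T)),
      all (fun r => valid_dec r.2) (rows T)
    & nilp (rows T) ==> nilp (cols T)].

Definition proj_row (D cs : seq nat) (v : seq bool) : seq bool :=
  [seq p.2 | p <- zip cs v & p.1 \notin D].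

Fixpoint first_rows (seen : seq (seq bool)) (s : seq (seq bool * seq nat))
  : seq (seq bool * seq nat) :=
  match s with
  | [::] => [::]
  | r :: s' => if r.1 \in seen then first_rows seen s'
               else r :: first_rows (r.1 :: seen) s'
  end.

Definition Iop (D : seq nat) (T : table) : table :=
  if all (fun c => c \in D) (cols T) then Lambda
  else Table [seq c <- cols T | c \notin D]
             (first_rows [::] [seq (proj_row D (cols T) r.1, r.2) | r <- rows T]).

Definition Jop (nu : seq bool -> seq nat) (T : table) : table :=
  Table (cols T) [seq (r.1, nu r.1) | r <- rows T].

Definition in_bracket (T T' : table) : Prop :=
  exists D : seq nat, {subset D <= cols T} /\
  exists nu : seq bool -> seq nat, (forall v, valid_dec (nu v)) /\
    T' = Jop nu (Iop D T).

Definition closed_class (A : table -> Prop) : Prop :=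
  (forall T, A T -> wf_table T) /\
  (forall T', A T' <-> exists T, A T /\ in_bracket T T').

Definition nontrivial (A : table -> Prop) : Prop :=
  exists T, A T /\ ~~ nilp (rows T).

Definition row_sat (cs : seq nat) (v : seq bool) (w : seq (nat * bool)) : bool :=
  all (fun p => nth false v (index p.1 cs) == p.2) w.

Definition subrows (T : table) (w : seq (nat * bool)) :=
  [seq r <- rows T | row_sat (cols T) r.1 w].

(* A non-root node: terminal node labeled with a decision, or a node labeled
   with an attribute together with its outgoing edges (edge label, child). *)
Inductive dnode := Leaf of nat | Node of nat & seq (bool * dnode).

(* A 2-decision tree: an unlabeled root and the children of the root. *)
Definition dtree := seq dnode.

Fixpoint node_wf (n : dnode) : bool :=
  match n with
  | Leaf _ => true
  | Node _ ch => (0 < size ch) && all (fun bc => node_wf bc.2) ch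
  end.

Definition tree_wf (G : dtree) : bool := (0 < size G) && all node_wf G.

Fixpoint node_det (n : dnode) : bool :=
  match n with
  | Leaf _ => true
  | Node _ ch => uniq (map fst ch) && all (fun bc => node_det bc.2) ch
  end.

Definition tree_det (G : dtree) : bool := (size G == 1) && all node_det G.

Fixpoint node_attrs (n : dnode) : seq nat :=
  match n with
  | Leaf _ => [::]
  | Node f ch => f :: flatten (map (fun bc => node_attrs bc.2) ch)
  end.

Definition tree_attrs (G : dtree) : seq nat := flatten (map node_attrs G).

(* complete paths: (pi(tau), decision at the terminal node) *)
Fixpoint node_paths (n : dnode) : seq (seq (nat * bool) * nat) :=
  match n with
  | Leaf d => [:: ([::], d)]
  | Node f ch =>
      flatten (map (fun bc => [seq ((f, bc.1) :: p.1, p.2) | p <- node_paths bc.2]) ch)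
  end.

Definition tree_paths (G : dtree) := flatten (map node_paths G).

Definition nd_tree_for (T : table) (G : dtree) : bool :=
  [&& tree_wf G,
      all (fun f => f \in cols T) (tree_attrs G),
      all (fun r => has (fun p => row_sat (cols T) r.1 p.1) (tree_paths G)) (rows T)
    & all (fun p => nilp (subrows T p.1) || all (fun r => p.2 \in r.2) (subrows T p.1))
          (tree_paths G)].

Definition det_tree_for (T : table) (G : dtree) : bool :=
  nd_tree_for T G && tree_det G.

Definition complexity_measure (psi : seq nat -> nat) : Prop :=
  [/\ forall a, psi a = 0 <-> a = [::],
      forall a b, perm_eq a b -> psi a = psi b,
      forall a b, psi a <= psi (a ++ b)
    & forall a b, psi (a ++ b) <= psi a + psi b].

Definition bounded_measure (psi : seq nat -> nat) : Prop :=
  complexity_measure psi /\ forall a, size a <= psi a.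

Definition tree_cost (psi : seq nat -> nat) (G : dtree) : nat :=
  \max_(p <- tree_paths G) psi (map fst p.1).

Definition psi_d (psi : seq nat -> nat) (T : table) : nat :=
  if nilp (rows T) then 0
  else nat_min (fun k => exists G, det_tree_for T G /\ tree_cost psi G = k).

Definition psi_a (psi : seq nat -> nat) (T : table) : nat :=
  if nilp (rows T) then 0
  else nat_min (fun k => exists G, nd_tree_for T G /\ tree_cost psi G = k).

Definition m_psi (psi : seq nat -> nat) (T : table) : nat :=
  \max_(f <- cols T) psi [:: f].

Definition consistent_word (a : seq (nat * bool)) : bool :=
  all (fun p => all (fun q => (p.1 == q.1) ==> (p.2 == q.2)) a) a.

Definition annihilating (T : table) (a : seq (nat * bool)) : bool :=
  [&& all (fun p => p.1 \in cols T) a, nilp (subrows T a) & consistent_word a].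

Definition irreducible (T : table) (a : seq (nat * bool)) : Prop :=
  forall b, subseq b a -> size b < size a -> ~~ annihilating T b.

(* G(T): maximum length of an irreducible annihilating word (0 if none);
   written as the least upper bound of these lengths (they are bounded). *)
Definition Gpar (T : table) : nat :=
  if nilp (rows T) then 0
  else nat_min (fun k => forall a, annihilating T a -> irreducible T a -> size a <= k).

Definition G_undef (psi : seq nat -> nat) (A : table -> Prop) (n : nat) : Prop :=
  infinite_set [set k | exists T, A T /\ m_psi psi T <= n /\ Gpar T = k].

Definition H_undef (psi : seq nat -> nat) (A : table -> Prop) (n : nat) : Prop :=
  infinite_set [set k | exists T, A T /\ psi_a psi T <= n /\ psi_d psi T = k].

(* Main.v *)
Require Import Defs.
From mathcomp Require Import all_boot.
From mathcomp Require Import boolp classical_sets cardinality.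
From mathcomp Require Import zify.
Set Implicit Arguments. Unset Strict Implicit. Unset Printing Implicit Defensive.

Lemma inf_unbounded (S : set nat) : infinite_set S -> forall K, exists k, S k /\ K <= k.
Proof.
move=> HS K; apply: contrapT => H; apply: HS.
apply: (@sub_finite_set _ _ `I_K) => // k Sk /=.
rewrite ltnNge; apply/negP => Kk; apply: H; by exists k.
Qed.

Lemma unbounded_inf (S : set nat) : (forall K, exists k, S k /\ K <= k) -> infinite_set S.
Proof.
move=> H /finite_seqP [s Hs].
have [k [Sk Hk]] := H (sumn s).+1.
have : k \in s by rewrite Hs in Sk.
clear Hs Sk; elim: s Hk => //= x s IH Hk; rewrite inE => /orP [/eqP Ex|ks]; first lia.
apply: IH => //; lia.
Qed.


Lemma nat_minP (P : nat -> Prop) : (exists k, P k) ->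
  P (nat_min P) /\ forall k, P k -> nat_min P <= k.
Proof.
rewrite /nat_min; case: pselect => // h _.
case: ex_minnP => m /asboolP Pm Hm; split => // k Pk; apply: Hm; exact/asboolP.
Qed.

Lemma nat_min_le (P : nat -> Prop) k : P k -> nat_min P <= k.
Proof. move=> Pk; have [_ H] := nat_minP (ex_intro _ k Pk); exact: H. Qed.

Fixpoint dnode_ind2 (P : dnode -> Prop) (HL : forall d, P (Leaf d))
  (HN : forall f ch, (forall bc, List.In bc ch -> P bc.2) -> P (Node f ch))
  (n : dnode) {struct n} : P n :=
  match n with
  | Leaf d => HL d
  | Node f ch => HN f ch
      ((fix go (s : seq (bool * dnode)) : forall bc, List.In bc s -> P bc.2 :=
         match s with
         | nil => fun bc H => match H with end
         | cons x s' => fun bc H =>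
             match H with
             | or_introl E =>
                 match x as x0 return x0 = bc -> P bc.2 with
                 | (b, c) => fun E' => eq_ind (b, c) (fun y => P y.2) (dnode_ind2 HL HN c) bc E'
                 end E
             | or_intror H' => go s' bc H'
             end
         end) ch)
  end.

Lemma In_all (T : Type) (p : T -> bool) s x : all p s -> List.In x s -> p x.
Proof. elim: s => //= y s IH /andP [py ps] [<-|]; [done | exact: IH]. Qed.

Lemma mem_node_paths f ch p :
  p \in node_paths (Node f ch) <->
  exists b c q, List.In (b, c) ch /\ q \in node_paths c /\ p = ((f, b) :: q.1, q.2).
Proof.
rewrite /=; elim: ch => [|[b c] ch IH] /=; first by split => // [[? [? [? []]]]].
rewrite mem_cat; split.
  case/orP => [/mapP [q qc ->]|/IH [b' [c' [q [H1 [H2 H3]]]]]].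
    by exists b, c, q; split; [left|].
  by exists b', c', q; split; [right|].
case=> b' [c' [q [[E|H1] [H2 H3]]]].
  case: E => Eb Ec; subst; apply/orP; left; apply/mapP; by exists q.
apply/orP; right; apply/IH; by exists b', c', q.
Qed.

Lemma node_paths_ex n : node_wf n -> exists p, p \in node_paths n.
Proof.
elim/dnode_ind2: n => [d|f ch IH]; first by exists ([::], d); rewrite inE.
case: ch IH => // [[b c] ch] IH /= /andP [wc _].
have [q qc] := IH (b, c) (or_introl erefl) wc.
exists ((f, b) :: q.1, q.2); rewrite mem_cat; apply/orP; left; apply/mapP; by exists q.
Qed.

Lemma In_fst_mem (ch : seq (bool * dnode)) b c : List.In (b, c) ch -> b \in map fst ch.
Proof. elim: ch => //= x s IH [E|H]; first by rewrite E inE eqxx. by rewrite inE IH ?orbT. Qed.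

Lemma det_uniq (ch : seq (bool * dnode)) b c1 c2 : uniq (map fst ch) ->
  List.In (b, c1) ch -> List.In (b, c2) ch -> c1 = c2.
Proof.
elim: ch => //= x s IH /andP [xs us] [E1|H1] [E2|H2].
- by rewrite E1 in E2; case: E2.
- by move: xs; rewrite E1 /= (In_fst_mem H2).
- by move: xs; rewrite E2 /= (In_fst_mem H1).
- exact: IH.
Qed.

Lemma all_flatten (T : Type) (p : T -> bool) ss : all p (flatten ss) = all (all p) ss.
Proof. by elim: ss => //= s ss IH; rewrite all_cat IH. Qed.

Lemma has_notin (Q C : seq nat) : count (mem Q) C < size C -> exists j, j \in C /\ j \notin Q.
Proof.
elim: C => //= y C IH H; case yQ: (y \in Q).
  have [j [jC jQ]] : exists j, j \in C /\ j \notin Q by apply: IH; move: H; rewrite yQ /=; lia.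
  by exists j; rewrite inE jC orbT.
by exists y; rewrite inE eqxx yQ.
Qed.

Lemma pick2 (Q C : seq nat) x : uniq C -> count (mem Q) C + 2 <= size C ->
  exists j, [/\ j \in C, j \notin Q & j != x].
Proof.
elim: C => //= y C IH /andP [yC uC] H; case yQ: (y \in Q).
  have [j [jC jQ jx]] : exists j, [/\ j \in C, j \notin Q & j != x]
    by apply: IH => //; move: H; rewrite yQ /=; lia.
  by exists j; rewrite inE jC orbT.
case yx: (y == x); last by exists y; rewrite inE eqxx yQ yx.
have [j [jC jQ]] : exists j, j \in C /\ j \notin Q by apply: has_notin; move: H; rewrite yQ /=; lia.
exists j; split => //; first by rewrite inE jC orbT.
rewrite -(eqP yx); apply/eqP => E; move: yC; by rewrite -E jC.
Qed.

Lemma row_sat_cat cs v w1 w2 : row_sat cs v (w1 ++ w2) = row_sat cs v w1 && row_sat cs v w2.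
Proof. by rewrite /row_sat all_cat. Qed.

Section Adv.
Variables (C : seq nat) (R : seq (seq bool * seq nat)) (av : nat -> bool).
Hypothesis UC : uniq C.
Hypothesis Hr : forall j, j \in C -> exists2 r, r \in R &
  (forall b, b \in C -> b != j -> nth false r.1 (index b C) = av b) /\ (forall d, d \in r.2 -> d = j).

Let T1 := Table C R.

Lemma sat_rj j r (w : seq (nat * bool)) : r \in R -> (forall b, b \in C -> b != j -> nth false r.1 (index b C) = av b) ->
  all (fun p => (p.1 \in C) && (p.2 == av p.1)) w -> j \notin map fst w -> row_sat C r.1 w.
Proof.
move=> _ Hb Hw jw; apply/allP => p pw; have /andP [p1C /eqP ->] := allP Hw p pw.
rewrite Hb //; apply/eqP => E; move: jw; by rewrite -E (map_f (@fst nat bool) pw).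
Qed.

Lemma count_mono (w q : seq (nat * bool)) : count (mem (map fst w)) C <= count (mem (map fst (w ++ q))) C.
Proof. apply: sub_count => j /=; by rewrite map_cat mem_cat => ->. Qed.

Lemma adv n : forall w : seq (nat * bool), node_wf n -> node_det n -> all (fun f => f \in C) (node_attrs n) ->
  all (fun p => (p.1 \in C) && (p.2 == av p.1)) w ->
  (forall r, r \in R -> row_sat C r.1 w -> has (fun p => row_sat C r.1 (w ++ p.1)) (node_paths n)) ->
  (forall p, p \in node_paths n -> nilp (subrows T1 (w ++ p.1)) || all (fun r => p.2 \in r.2) (subrows T1 (w ++ p.1))) ->
  exists2 p, p \in node_paths n & size C <= (count (mem (map fst (w ++ p.1))) C).+1.
Proof.
elim/dnode_ind2: n => [d|f ch IH] w Hwf Hdet Hat Hw Hcov Hcor.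
  case: (leqP (count (mem (map fst w)) C + 2) (size C)) => Hc; last first.
    by exists ([::], d); rewrite ?inE // cats0; lia.
  have [j1 [j1C j1w]] : exists j, j \in C /\ j \notin map fst w by apply: has_notin; lia.
  have [j2 [j2C j2w j21]] := pick2 j1 UC Hc.
  have [r1 r1R [Hr1 Hd1]] := Hr j1C.
  have [r2 r2R [Hr2 Hd2]] := Hr j2C.
  have s1 := sat_rj r1R Hr1 Hw j1w.
  have s2 := sat_rj r2R Hr2 Hw j2w.
  have := Hcor ([::], d); rewrite inE eqxx => /(_ isT) /orP [].
    have m1 : r1 \in subrows T1 (w ++ [::]) by rewrite cats0 mem_filter s1 r1R.
    by case: (subrows T1 (w ++ [::])) m1.
  move=> /allP Hall.
  have m1 : r1 \in subrows T1 (w ++ [::]) by rewrite cats0 mem_filter s1 r1R.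
  have m2 : r2 \in subrows T1 (w ++ [::]) by rewrite cats0 mem_filter s2 r2R.
  have E1 := Hd1 _ (Hall r1 m1).
  have E2 := Hd2 _ (Hall r2 m2).
  by move: j21; rewrite -E1 -E2 eqxx.
move: Hwf Hdet Hat => /= /andP [szch Hwfch] /andP [uch Hdetch] /andP [fC Hatch].
case: (leqP (count (mem (map fst w)) C + 2) (size C)) => Hc; last first.
  have wfn : node_wf (Node f ch) by rewrite /= szch Hwfch.
  have [p pP] := node_paths_ex wfn.
  exists p => //; apply: (leq_trans (n := (count (mem (map fst w)) C).+1)).
    by move: Hc; rewrite addn2 ltnS.
  by rewrite ltnS count_mono.
have [j [jC jw jf]] := pick2 f UC Hc.
have [r rR [Hr1 Hd]] := Hr jC.
have := Hcov r rR (sat_rj rR Hr1 Hw jw) => /hasP [p pP].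
case/mem_node_paths: pP => b [c [q [Inbc [qc ->]]]].
rewrite row_sat_cat /= => /andP [_ /andP [/eqP Hb _]].
have Hb' : b = av f by rewrite -Hb Hr1 // eq_sym.
subst b; rewrite Hb' in Inbc.
have wfc : node_wf c := In_all Hwfch Inbc.
have detc : node_det c := In_all Hdetch Inbc.
have atc : all (fun f => f \in C) (node_attrs c).
  by move: Hatch; rewrite all_flatten all_map => H; exact: (In_all H Inbc).
have Hw' : all (fun p => (p.1 \in C) && (p.2 == av p.1)) (w ++ [:: (f, av f)]).
  by rewrite all_cat Hw /= fC eqxx.
have Hcov' : forall r', r' \in R -> row_sat C r'.1 (w ++ [:: (f, av f)]) ->
    has (fun p => row_sat C r'.1 ((w ++ [:: (f, av f)]) ++ p.1)) (node_paths c).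
  move=> r' r'R; rewrite row_sat_cat /= andbT => /andP [sw /eqP sf].
  have := Hcov r' r'R sw => /hasP [pp pP].
  case/mem_node_paths: pP => b [c' [q'' [Inbc' [q''c ->]]]].
  rewrite row_sat_cat /= => /andP [_ /andP [/eqP Hb sq]].
  rewrite sf in Hb; subst b.
  have Ec := det_uniq uch Inbc Inbc'; subst c'.
  apply/hasP; exists q'' => //; by rewrite -catA row_sat_cat /= sw sf eqxx sq.
have Hcor' : forall p, p \in node_paths c ->
    nilp (subrows T1 ((w ++ [:: (f, av f)]) ++ p.1)) ||
    all (fun r => p.2 \in r.2) (subrows T1 ((w ++ [:: (f, av f)]) ++ p.1)).
  move=> q'' q''c; rewrite -catA /=.
  apply: (Hcor ((f, av f) :: q''.1, q''.2)).
  apply/mem_node_paths; by exists (av f), c, q''.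
have [q' q'c Hq'] := IH _ Inbc (w ++ [:: (f, av f)]) wfc detc atc Hw' Hcov' Hcor'.
exists ((f, av f) :: q'.1, q'.2); last by rewrite -catA in Hq'.
apply/mem_node_paths; by exists (av f), c, q'.
Qed.
End Adv.


Section Trees.
Variables (C : seq nat) (R : seq (seq bool * seq nat)) (av : nat -> bool).
Hypothesis Hdis : forall r, r \in R -> exists2 a, a \in C & nth false r.1 (index a C) != av a.
Hypothesis Hnu : forall r a, r \in R -> a \in C -> nth false r.1 (index a C) != av a -> a \in r.2.

Let T1 := Table C R.

Definition star := [seq Node a [:: (~~ av a, Leaf a)] | a <- C].

Lemma star_paths : tree_paths star = [seq ([:: (a, ~~ av a)], a) | a <- C].
Proof. rewrite /tree_paths /star; by elim: C => //= a s ->. Qed.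

Lemma star_attrs : tree_attrs star = C.
Proof. rewrite /tree_attrs /star; by elim: C => //= a s ->. Qed.

Lemma sat1 v a b : row_sat C v [:: (a, b)] = (nth false v (index a C) == b).
Proof. by rewrite /row_sat /= andbT. Qed.

Lemma negb_neq (x y : bool) : (x == ~~ y) = (x != y).
Proof. by case: x; case: y. Qed.

Lemma star_nd : 0 < size C -> nd_tree_for T1 star.
Proof.
move=> HC; apply/and4P; split.
- rewrite /tree_wf /star size_map HC /=; by elim: (C) => //= a s ->.
- by rewrite star_attrs; apply/allP.
- apply/allP => r rR /=; rewrite star_paths; have [a aC da] := Hdis rR.
  apply/hasP; exists ([:: (a, ~~ av a)], a); first exact: map_f.
  by rewrite /row_sat /= andbT negb_neq.
- rewrite star_paths; apply/allP => p /mapP [a aC ->] /=; apply/orP; right.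
  apply/allP => r; rewrite mem_filter /= /row_sat /= andbT negb_neq => /andP [da rR].
  exact: Hnu.
Qed.

Lemma star_cost psi : tree_cost psi star = \max_(a <- C) psi [:: a].
Proof. by rewrite /tree_cost star_paths big_map. Qed.

Fixpoint chain (s : seq nat) : dnode :=
  if s is a :: s' then Node a [:: (~~ av a, Leaf a); (av a, chain s')] else Leaf 0.

Lemma chain_wf s : node_wf (chain s).
Proof. by elim: s => //= a s ->. Qed.

Lemma chain_det s : node_det (chain s).
Proof. by elim: s => //= a s ->; case: (av a). Qed.

Lemma chain_attrs s : all (fun f => f \in C) s -> all (fun f => f \in C) (node_attrs (chain s)).
Proof. elim: s => //= a s IH /andP [aC sC]; by rewrite aC cats0 IH. Qed.

Lemma chain_paths s p : p \in node_paths (chain s) ->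
  (exists a, [/\ a \in s, (a, ~~ av a) \in p.1 & p.2 = a]) \/
  (p.2 = 0 /\ forall a, a \in s -> (a, av a) \in p.1).
Proof.
elim: s p => [|a s IH] p.
  by rewrite inE => /eqP ->; right.
case/mem_node_paths => b [c [q [Hin [qc ->]]]] /=.
case: Hin => [E|[E|//]]; case: E => Eb Ec; subst b c.
  by left; exists a; rewrite inE eqxx mem_head; move: qc; rewrite inE => /eqP ->.
case: (IH q qc) => [[a' [a's H1 H2]]|[H1 H2]].
  by left; exists a'; rewrite inE a's orbT inE H1 orbT.
right; split => // a'; rewrite !inE => /orP [/eqP ->|/H2 ->]; by rewrite ?eqxx ?orbT.
Qed.

Lemma chain_cover s v : (exists2 a, a \in s & nth false v (index a C) != av a) ->
  has (fun p => row_sat C v p.1) (node_paths (chain s)).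
Proof.
elim: s => [[? //]|a s IH] [a0 a0s d0].
case E: (nth false v (index a C) == av a).
  have a0s' : a0 \in s.
    move: a0s; rewrite inE => /orP [/eqP Ea|//]; by move: d0; rewrite Ea E.
  have /hasP [q qc sq] := IH (ex_intro2 _ _ a0 a0s' d0).
  apply/hasP; exists ((a, av a) :: q.1, q.2).
    apply/mem_node_paths; exists (av a), (chain s), q; split => //; by right; left.
  by rewrite /row_sat /= E.
apply/hasP; exists ([:: (a, ~~ av a)], a).
  apply/mem_node_paths; exists (~~ av a), (Leaf a), ([::], a); split => //; [by left | by rewrite inE].
by rewrite /row_sat /= andbT negb_neq E.
Qed.

Lemma chain_det_tree : 0 < size C -> det_tree_for T1 [:: chain C].
Proof.
move=> HC; apply/andP; split; last by rewrite /tree_det /= chain_det.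
apply/and4P; split.
- by rewrite /tree_wf /= chain_wf.
- by rewrite /tree_attrs /= cats0 chain_attrs //; apply/allP.
- apply/allP => r rR /=; rewrite /tree_paths /= cats0; apply: chain_cover; exact: Hdis.
- rewrite /tree_paths /= cats0; apply/allP => p /chain_paths [[a [aC ap ->]]|[_ H]].
    apply/orP; right; apply/allP => r; rewrite mem_filter /= => /andP [sr rR].
    apply: Hnu => //; have := allP sr _ ap; by rewrite /= negb_neq.
  apply/orP; left; case E: (subrows T1 p.1) => [|r rs] //.
  have : r \in subrows T1 p.1 by rewrite E mem_head.
  rewrite mem_filter /= => /andP [sr rR].
  have [a aC da] := Hdis rR; have := allP sr _ (H a aC); by rewrite /= (negbTE da).
Qed.
End Trees.


Lemma gpar_word T : 0 < Gpar T ->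
  exists a, [/\ annihilating T a, irreducible T a & Gpar T <= size a].
Proof.
rewrite /Gpar; case: (nilp (rows T)) => //.
set P := (fun k => forall a, annihilating T a -> irreducible T a -> size a <= k).
case: (pselect (exists k, P k)) => [ex|nex]; last first.
  by rewrite /nat_min; case: pselect.
have [Pm Hm] := nat_minP ex; move=> Hpos.
apply: contrapT => H.
have : P (nat_min P).-1.
  move=> a Ha Hi; case: (leqP (nat_min P) (size a)) => h; last lia.
  by exfalso; apply: H; exists a.
move=> /Hm; lia.
Qed.

Lemma proj_nth D cs u a : size u = size cs -> a \notin D ->
  nth false (proj_row D cs u) (index a [seq c <- cs | c \notin D]) = nth false u (index a cs).
Proof.
elim: cs u => [|c cs IH] [|b u] //= [Hs] aD.
rewrite /proj_row /=; case cD: (c \notin D) => /=.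
  by case: (c == a) => //=; exact: IH.
have ca : c != a by apply/eqP => E; move: cD; rewrite E aD.
by rewrite (negbTE ca) /=; exact: IH.
Qed.

Lemma first_rows_mem seen (s : seq (seq bool * seq nat)) x :
  x \in map fst s -> x \notin seen -> x \in map fst (first_rows seen s).
Proof.
elim: s seen => //= r s IH seen; rewrite inE => /orP [/eqP ->|xs] xseen.
  by rewrite (negbTE xseen) /= inE eqxx.
case: ifP => rseen; first exact: IH.
rewrite /= inE; case: (eqVneq x r.1) => //= xr; apply: IH => //.
by rewrite inE negb_or xr.
Qed.

Lemma first_rows_sub seen (s : seq (seq bool * seq nat)) r :
  r \in first_rows seen s -> r \in s.
Proof.
elim: s seen => //= r' s IH seen; case: ifP => _.
  by move/IH; rewrite inE orbC => ->.
by rewrite !inE => /orP [->|/IH ->]; rewrite ?orbT.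
Qed.

Lemma annih_undup T a : annihilating T (undup a) = annihilating T a.
Proof.
rewrite /annihilating all_undup.
have -> : subrows T (undup a) = subrows T a.
  by apply: eq_filter => r; rewrite /row_sat all_undup.
congr (_ && (_ && _)); rewrite /consistent_word all_undup; apply: eq_all => p.
by rewrite all_undup.
Qed.

Lemma irr_uniq T a : annihilating T a -> irreducible T a -> uniq a.
Proof.
move=> Ha Hi; apply: contraT => nu.
have := Hi (undup a) (undup_subseq a); rewrite ltn_size_undup nu => /(_ isT).
by rewrite annih_undup Ha.
Qed.


Lemma leq_sumn (s : seq nat) i : i \in s -> i <= sumn s.
Proof. elim: s => //= x s IH; rewrite inE => /orP [/eqP ->|/IH]; lia. Qed.

Lemma construct (A : table -> Prop) psi n T al :
  closed_class A -> bounded_measure psi -> A T -> m_psi psi T <= n ->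
  annihilating T al -> irreducible T al -> 0 < size al ->
  exists T1, [/\ A T1, psi_a psi T1 <= n & size al <= (psi_d psi T1).+1].
Proof.
move=> [HwfA HclA] [_ Hsize] AT mT Ha Hi Hal.
move: (HwfA T AT) => /and5P [ucols Hsizes urows Hvalid _].
move: (Ha) => /and3P [attrsT nilT consT].
pose S := map fst al.
have ual : uniq al := irr_uniq Ha Hi.
have inj : {in al &, injective fst}.
  move=> p q pa qa E; have := allP (allP consT p pa) q qa; rewrite E eqxx /= => /eqP E2.
  by case: p q E E2 {pa qa} => [? ?] [? ?] /= -> ->.
have uS : uniq S by rewrite /S map_inj_in_uniq.
pose av := fun a => (a, true) \in al.
have AV : forall p, p \in al -> p.2 = av p.1.
  case=> a b pa /=; rewrite /av; case: b pa => pa; first by rewrite pa.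
  apply/esym/negbTE/negP => ta; have := allP (allP consT _ pa) _ ta; by rewrite /= eqxx.
have AVin : forall a, a \in S -> (a, av a) \in al.
  move=> a /mapP [[a' b] pa /= ->]; move: (AV _ pa) => /= Eb; by rewrite -Eb.
have SinT : forall a, a \in S -> a \in cols T.
  move=> a /mapP [p pa ->]; exact: (allP attrsT p pa).
pose D := [seq c <- cols T | c \notin S].
pose C := [seq c <- cols T | c \notin D].
have memC : forall a, (a \in C) = (a \in S).
  move=> a; rewrite !mem_filter negb_and negbK.
  by case aS: (a \in S) => /=; [rewrite SinT | case: (a \in cols T)].
have uC : uniq C := filter_uniq _ ucols.
have szC : size C = size al.
  rewrite -(size_map fst al); apply: perm_size; apply: uniq_perm => // x; by rewrite memC.
have nD : forall a, a \in S -> a \notin D by move=> a aS; rewrite mem_filter aS.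
pose proj := proj_row D (cols T).
have NTH : forall u a, u \in map fst (rows T) -> a \in S ->
    nth false (proj u) (index a C) = nth false u (index a (cols T)).
  move=> u a /mapP [r rT ->] aS; apply: proj_nth; [exact: eqP (allP Hsizes r rT) | exact: nD].
have nilE : subrows T al = [::] by move: nilT; case: (subrows T al).
have F1 : forall u, u \in map fst (rows T) ->
    exists2 a, a \in S & nth false u (index a (cols T)) != av a.
  move=> u /mapP [r rT ->]; apply: contrapT => H.
  have : r \in subrows T al.
    rewrite mem_filter rT andbT; apply/allP => p pa; rewrite (AV p pa).
    apply/eqP; apply: contrapT => ne; apply: H; exists p.1; [exact: map_f | exact/eqP].
  by rewrite nilE.
have F2 : forall a, a \in S -> exists2 u, u \in map fst (rows T) &
    nth false u (index a (cols T)) != av a /\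
    (forall b, b \in S -> b != a -> nth false u (index b (cols T)) = av b).
  move=> a aS; pose w := [seq p <- al | p.1 != a].
  have wsub : subseq w al := filter_subseq _ _.
  have wsz : size w < size al.
    rewrite size_filter -[X in _ < X](count_predC (fun p : nat * bool => p.1 != a) al).
    rewrite -{1}[count _ _]addn0 ltn_add2l -has_count; apply/hasP; exists (a, av a).
      exact: AVin.
    by rewrite /= eqxx.
  have := Hi w wsub wsz; rewrite /annihilating.
  have -> : all (fun p => p.1 \in cols T) w.
    by apply/allP=> p; rewrite mem_filter => /andP [_ pa]; exact: (allP attrsT p pa).
  have -> : consistent_word w.
    apply/allP => p; rewrite mem_filter => /andP [_ pa]; apply/allP => q.
    rewrite mem_filter => /andP [_ qa]; exact: (allP (allP consT p pa) q qa).
  rewrite /= andbT.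
  case E: (subrows T w) => [|r rs] // _.
  have : r \in subrows T w by rewrite E mem_head.
  rewrite mem_filter => /andP [sr rT].
  exists r.1; first exact: map_f.
  split.
    apply/negP => /eqP ea.
    have : r \in subrows T al.
      rewrite mem_filter rT andbT; apply/allP => p pa; case: (eqVneq p.1 a) => [pa1|pna].
        by rewrite (AV p pa) pa1 ea eqxx.
      by apply: (allP sr p); rewrite mem_filter pna pa.
    by rewrite nilE.
  move=> b bS ba; have := allP sr (b, av b); rewrite mem_filter /= ba AVin // => /(_ isT) /eqP.
  done.
pose N := (sumn S).+1.
have Slt : forall i, i \in S -> i < N by move=> i /leq_sumn; rewrite /N ltnS.
pose lst := fun v => [seq i <- iota 0 N | (i \in S) && (nth false v (index i C) != av i)].
pose nu := fun v => if nilp (lst v) then [:: 0] else lst v.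
have nu_spec : forall v a, a \in S -> nth false v (index a C) != av a ->
    forall d, (d \in nu v) = (d \in S) && (nth false v (index d C) != av d).
  move=> v a aS da d.
  have al' : a \in lst v by rewrite mem_filter aS da mem_iota add0n Slt.
  have hl : ~~ nilp (lst v) by case: (lst v) al'.
  rewrite /nu (negbTE hl) mem_filter mem_iota add0n /=.
  by case dS: (d \in S) => //=; rewrite Slt ?andbT.
have valid_nu : forall v, valid_dec (nu v).
  move=> v; rewrite /nu; case: ifP => // /negbT hl; rewrite /valid_dec hl andbT.
  apply: sorted_filter; [exact: ltn_trans | exact: iota_ltn_sorted].
pose L := [seq (proj r.1, r.2) | r <- rows T].
have HI : Iop D T = Table C (first_rows [::] L).
  rewrite /Iop; case: ifP => // /allP H; exfalso.
  have [p pa] : exists p, p \in al by case: (al) Hal => // p ? _; exists p; rewrite mem_head.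
  have := H p.1 (allP attrsT p pa); by rewrite (negbTE (nD _ (map_f fst pa))).
pose R := [seq (r.1, nu r.1) | r <- first_rows [::] L].
have ET1 : Jop nu (Iop D T) = Table C R by rewrite HI.
have AT1 : A (Table C R).
  rewrite -ET1; apply/HclA; exists T; split => //; exists D; split.
    by move=> x; rewrite mem_filter => /andP [].
  by exists nu.
have Rrow : forall r, r \in R -> exists2 u, u \in map fst (rows T) & r = (proj u, nu (proj u)).
  move=> r /mapP [r' r'F ->]; have := first_rows_sub r'F => /mapP [r0 r0T ->].
  exists r0.1 => //; exact: map_f.
have Rin : forall u, u \in map fst (rows T) -> (proj u, nu (proj u)) \in R.
  move=> u uT; have : proj u \in map fst (first_rows [::] L).
    apply: first_rows_mem => //; move: uT => /mapP [r rT ->]; apply/mapP.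
    by exists (proj r.1, r.2) => //; apply/mapP; exists r.
  move=> /mapP [r' r'F E]; apply/mapP; exists r' => //; by rewrite -E.
have Hdis : forall r, r \in R -> exists2 a, a \in C & nth false r.1 (index a C) != av a.
  move=> r /Rrow [u uT ->]; have [a aS da] := F1 u uT.
  by exists a; rewrite ?memC //= NTH.
have Hnu : forall r a, r \in R -> a \in C -> nth false r.1 (index a C) != av a -> a \in r.2.
  move=> r a /Rrow [u uT ->]; rewrite memC /= => aS da.
  by rewrite (nu_spec _ a aS da) aS da.
have Hr : forall j, j \in C -> exists2 r, r \in R &
    (forall b, b \in C -> b != j -> nth false r.1 (index b C) = av b) /\
    (forall d, d \in r.2 -> d = j).
  move=> j; rewrite memC => jS; have [u uT [dj ag]] := F2 j jS.
  exists (proj u, nu (proj u)); first exact: Rin.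
  split => [b|d] /=; first by rewrite memC => bS bj; rewrite NTH // ag.
  have djp : nth false (proj u) (index j C) != av j by rewrite NTH.
  rewrite (nu_spec _ j jS djp) => /andP [dS dd].
  apply/eqP; apply: contraT => dj'; move: dd; by rewrite NTH // ag // eqxx.
have Cpos : 0 < size C by rewrite szC.
have Rne : ~~ nilp R.
  case: (C) Cpos Hr (memC) => // c C' _ /(_ c (mem_head _ _)) [r rR _] _; by case: (R) rR.
exists (Table C R); split => //.
  rewrite /psi_a /= (negbTE Rne).
  apply: leq_trans (nat_min_le (k := tree_cost psi (star C av)) _) _.
    by exists (star C av); split => //; exact: star_nd.
  rewrite star_cost; apply/bigmax_leqP_seq => a aC _; apply: leq_trans mT.
  rewrite /m_psi; apply: (@leq_bigmax_seq _ _ _ (fun f => psi [:: f]) a) => //.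
  by rewrite SinT // -memC.
rewrite /psi_d /= (negbTE Rne).
have ex : exists k, exists G, det_tree_for (Table C R) G /\ tree_cost psi G = k.
  by exists (tree_cost psi [:: chain av C]), [:: chain av C]; split => //; exact: chain_det_tree.
have [[G [HG <-]] _] := nat_minP ex.
move: HG => /andP [/and4P [wfG atG covG corG] /andP [/eqP sz1 detG]].
case: G sz1 wfG atG covG corG detG => // n0 [] // _ wfG atG covG corG detG.
rewrite /tree_paths /= cats0 in covG corG.
move: wfG detG atG; rewrite /tree_wf /tree_det /tree_attrs /= !andbT cats0 => wf0 det0 at0.
have [p pP Hp] := adv (w := [::]) uC Hr wf0 det0 at0 isT
  (fun r rR _ => allP covG r rR) (fun p pP => allP corG p pP).
rewrite -szC; apply: leq_trans Hp _; rewrite ltnS /=.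
apply: (@leq_trans (size (map fst p.1))).
  rewrite -size_filter; apply: uniq_leq_size; first exact: filter_uniq.
  by move=> x; rewrite mem_filter => /andP [].
apply: leq_trans (Hsize _) _.
rewrite /tree_cost /tree_paths /= cats0.
exact: (@leq_bigmax_seq _ _ _ (fun p => psi (map fst p.1)) p).
Qed.


Theorem lemma14 (A : table -> Prop) (psi : seq nat -> nat) :
  closed_class A -> nontrivial A -> bounded_measure psi ->
  (exists n, G_undef psi A n) ->
  exists n, H_undef psi A n.
Proof.
move=> HA _ Hpsi [n Gn]; exists n; apply: unbounded_inf => K.
have [k [[T [AT [mT GT]]] Kk]] := inf_unbounded Gn K.+2.
have Hpos : 0 < Gpar T by rewrite GT; lia.
have [al [Ha Hi Hsz]] := gpar_word Hpos.
have [T1 [AT1 Ha1 Hd1]] := construct HA Hpsi AT mT Ha Hi (leq_trans Hpos Hsz).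
exists (psi_d psi T1); split; first by exists T1.
lia.
Qed.
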